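(* Let $u$ and $v$ be vertices of $G$ such that $u$ is neither an ancestor nor a descendant of $v$. Suppose the set $X$ of Case 3 of the routing algorithm (the vertices of $C_{T^u}$ that are ancestors of $v$ and not ancestors of $u$) is non-empty. Then the vertices visited when executing the routing steps of Case 3 b) lie on the path in $T$ from $lca(u,v)$ to $v$, and they are visited in the order in which they appear on this path.
   Context: Let $T$ be a rooted tree on $n$ vertices with positive edge weights; $P(a,b)$ is the path in $T$ from $a$ to $b$ and $\delta_T(a,b)$ its weight; $lca(a,b)$ is the lowest common ancestor. Ancestor/descendant refer to $T$, and a vertex counts as its own ancestor and descendant; ''deepest''/''highest'' refer to depth in $T$. $T_v$ is the subtree of $T$ rooted at $v$. For every non-leaf vertex $v$ fix a child $c_1(v)$ with $|T_{c_1(v)}|$ maximal; edges $(v,c_1(v))$ are leftmost. A subtree $R$ of $T$ is rooted at its vertex closest to the root, $rt(R)$, and inherits the leftmost labelling; $R_v$ is the subtree of $R$ rooted at $v$. $P_R(v)$ is the longest downward path from $v$ in $R$ using only leftmost edges, with last vertex $l(v)$; $l(R):=l(rt(R))$. A vertex $v$ of $R$ is $d$-balanced if $|R_{c_1(v)}|\le |R|-d$ (with $|R_{c_1(v)}|=0$ if $c_1(v)$ is undefined or not in $R$); $b_d(v)$ is the first $d$-balanced vertex on $P_R(v)$, or NULL. $CV(R,d)=\emptyset$ if $b_d(rt(R))$ is NULL, else $\{b\}\cup\bigcup_w CV(R_w,d)$ with $b=b_d(rt(R))$ and $w$ ranging over children of $b$ in $R$. Fix an integer $k\ge4$; for a subtree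 $R$ with $m$ vertices, $C_R=V(R)$ if $k\ge m/2-1$, else $C_R=CV(R,m/k)\cup\{l(R),rt(R)\}$. Canonical subtrees: $T$ is canonical; if $R$ is canonical, each component of $R$ minus $C_R$ is canonical. Each vertex $v$ lies in $C_R$ for exactly one canonical $R$, denoted $T^v$. The spanner $G$ has vertex set $V(T)$ and edges: all edges of $T$, and all pairs of distinct vertices of $C_R$ for every canonical $R$; edge $(a,b)$ has weight $\delta_T(a,b)$. Routing algorithm from current vertex $u$ to destination $v$: Case 0: if $v$ is adjacent to $u$, move to $v$. Case 1: $u$ is an ancestor of $v$; let $X$ be the vertices of $C_{T^u}$ that are ancestors of $v$, $x$ the deepest; move to $x$, then to the child of $x$ that is an ancestor of $v$. Case 2: $u$ is a descendant of $v$; let $X$ be the vertices of $C_{T^u}$ that are descendants of $v$ and ancestors of $u$, $x$ the highest; move to $x$, then to the parent of $x$. Case 3: $u$ is neither; let $X$ be the vertices of $C_{T^u}$ that are ancestors of $v$ but not of $u$, and $Y$ those that are ancestors of $u$ but not of $v$, $y$ the highest vertex of $Y$. Case 3 a): $X=\emptyset$: move to $y$, then to the parent of $y$. Case 3 b): $X\neq\emptyset$: with $x$ the deepest vertex of $X$ and $x'$ the child of $x$ that is an ancestor of $v$, move to $x$, then to $x'$. (Moving to the current vertex means staying.) *)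

(* Defs.v *)
From Stdlib Require Import Relations.
From mathcomp Require Import all_boot.

Set Implicit Arguments.
Unset Strict Implicit.
Unset Printing Implicit Defensive.

(* A rooted tree on the finite vertex type V, given by a root and a parent
   map; every vertex reaches the root by iterating the parent map (so there
   are no cycles).  The root is its own parent. *)
Record rtree (V : finType) := RTree {
  root : V;
  par : V -> V;
  par_root : par root = root;
  par_reach : forall x, exists n, iter n par x = root
}.

Section Tree.
Variables (V : finType) (T : rtree V).

Definition ancestor (a b : V) : bool :=
  [exists i : 'I_#|V|, iter i (par T) b == a].

Definition depth (x : V) : nat := #|[set a | ancestor a x]|.-1.

Definition child (c x : V) : Prop := par T c = x /\ c <> x.

Definition tedge (a b : V) : Prop := child a b \/ child b a.

Definition desc (x : V) : {set V} := [set y | ancestor x y].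

Definition is_lca (u v a : V) : Prop :=
  ancestor a u /\ ancestor a v /\
  forall b, ancestor b u -> ancestor b v -> ancestor b a.

(* The tree path P(a,b) for a an ancestor of b, listed from a down to b. *)
Definition tpath (a b : V) : seq V :=
  rev (traject (par T) b (depth b - depth a).+1).

(* Specification of the fixed leftmost-child choice c1 (None = undefined,
   i.e. the vertex is a leaf). *)
Definition leftmost_spec (c1 : V -> option V) : Prop :=
  forall x,
    (c1 x = None <-> forall c, ~ child c x) /\
    (forall c, c1 x = Some c ->
       child c x /\ forall w, child w x -> #|desc w| <= #|desc c|).

Section Routing.
Variables (c1 : V -> option V) (k : nat).

Definition is_rt (R : {set V}) (r : V) : Prop :=
  r \in R /\ forall y, y \in R -> ancestor r y.

Definition subR (R : {set V}) (x : V) : {set V} := R :&: desc x.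

Definition lm (n : nat) (x : V) : option V := iter n (fun o => obind c1 o) (Some x).

Definition chain_in (R : {set V}) (x : V) (n : nat) : Prop :=
  forall j, j <= n -> exists z, lm j x = Some z /\ z \in R.

Definition is_l (R : {set V}) (x y : V) : Prop :=
  exists n, chain_in R x n /\ lm n x = Some y /\
            forall c, c1 y = Some c -> c \notin R.

Definition sizec1 (R : {set V}) (y : V) : nat :=
  match c1 y with
  | Some c => if c \in R then #|subR R c| else 0
  | None => 0
  end.

(* y is d-balanced in R, for d = m/k:  |R_{c1 y}| <= |R| - m/k,
   i.e. (k > 0) k * |R_{c1 y}| + m <= k * |R|. *)
Definition balanced (m : nat) (R : {set V}) (y : V) : Prop :=
  k * sizec1 R y + m <= k * #|R|.

Definition is_b (m : nat) (R : {set V}) (x b : V) : Prop :=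
  exists n, chain_in R x n /\ lm n x = Some b /\ balanced m R b /\
    forall j z, j < n -> lm j x = Some z -> ~ balanced m R z.

Inductive inCV (m : nat) : {set V} -> V -> Prop :=
| CV_here R r b : is_rt R r -> is_b m R r b -> inCV m R b
| CV_rec R r b w x : is_rt R r -> is_b m R r b -> w \in R -> child w b ->
    inCV m (subR R w) x -> inCV m R x.

Definition inC (R : {set V}) (x : V) : Prop :=
  let m := #|R| in
  if m <= 2 * k + 2  (* k >= m/2 - 1 *)
  then is_true (x \in R)
  else inCV m R x \/ is_rt R x \/ (exists r, is_rt R r /\ is_l R r x).

Definition rest (R : {set V}) (x : V) : Prop := x \in R /\ ~ inC R x.

Definition component (R S : {set V}) : Prop :=
  exists x0, rest R x0 /\
    forall y, y \in S <->
      clos_refl_trans V (fun a b => rest R a /\ rest R b /\ tedge a b) x0 y.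

Inductive canon : {set V} -> Prop :=
| canon_T : canon setT
| canon_C R S : canon R -> component R S -> canon S.

Definition adjG (a b : V) : Prop :=
  a <> b /\ (tedge a b \/ exists R, canon R /\ inC R a /\ inC R b).

End Routing.
End Tree.

(* Main.v *)
Require Import Defs.
From Stdlib Require Import Relations.
From mathcomp Require Import all_boot.
From mathcomp Require Import zify.

Section Aux.
Variables (V : finType) (T : rtree V).
Local Notation p := (par T).

Lemma reachb (x : V) : exists n, iter n p x == Defs.root T.
Proof. by case: (par_reach T x) => n E; exists n; apply/eqP. Qed.

Definition hit (x : V) : nat := ex_minn (reachb x).

Lemma hit_root x : iter (hit x) p x = Defs.root T.
Proof. rewrite /hit; case: ex_minnP => n /eqP -> //. Qed.

Lemma hit_min x n : iter n p x = Defs.root T -> hit x <= n.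
Proof. rewrite /hit; case: ex_minnP => m _ H Hn; apply: H; exact/eqP. Qed.

Lemma iter_root n : iter n p (Defs.root T) = Defs.root T.
Proof. elim: n => //= n ->; exact: par_root. Qed.

Lemma iter_ge x n : hit x <= n -> iter n p x = Defs.root T.
Proof.
move=> H; rewrite -(subnK H) iterD hit_root; exact: iter_root.
Qed.

Lemma iter_red x n : iter n p x = iter (minn n (hit x)) p x.
Proof.
case: (leqP n (hit x)) => H.
  by [].
rewrite hit_root; apply: iter_ge; exact: ltnW.
Qed.

Lemma iter_inj x i j : i <= hit x -> j <= hit x -> iter i p x = iter j p x -> i = j.
Proof.
wlog: i j / i <= j.
  move=> W Hi Hj E; case: (leqP i j) => H; first exact: W.
  symmetry; apply: W => //; exact: ltnW.
move=> Hij Hi Hj E; apply/eqP; rewrite eqn_leq Hij /=; apply/negP => Hji.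
have: iter (hit x - j + i) p x = Defs.root T.
  by rewrite iterD E -iterD subnK // hit_root.
move/hit_min; lia.
Qed.

Lemma hit_lt x : hit x < #|V|.
Proof.
have inj: injective (fun i : 'I_(hit x).+1 => iter i p x).
  move=> i j /iter_inj H; apply/val_inj/H; rewrite -ltnS; exact: ltn_ord.
by have := leq_card _ inj; rewrite card_ord.
Qed.

Lemma ancP a b : ancestor T a b <-> exists2 i, i <= hit b & iter i p b = a.
Proof.
split.
  case/existsP => i /eqP <-; exists (minn i (hit b)); first exact: geq_minr.
  by rewrite -iter_red.
case=> i Hi E; apply/existsP.
have Hlt : i < #|V| by apply: leq_ltn_trans Hi (hit_lt b).
by exists (Ordinal Hlt); rewrite /= E.
Qed.

Lemma ancE a b n : iter n p b = a -> ancestor T a b.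
Proof.
move=> E; apply/ancP; exists (minn n (hit b)); first exact: geq_minr.
by rewrite -iter_red.
Qed.

Lemma hit_iter x i : i <= hit x -> hit (iter i p x) = hit x - i.
Proof.
move=> H; apply/eqP; rewrite eqn_leq; apply/andP; split.
  apply: hit_min; by rewrite -iterD subnK // hit_root.
have: iter (hit (iter i p x) + i) p x = Defs.root T by rewrite iterD hit_root.
move/hit_min; lia.
Qed.

Lemma depth_hit x : depth T x = hit x.
Proof.
rewrite /depth.
have inj: injective (fun i : 'I_(hit x).+1 => iter i p x).
  move=> i j /iter_inj H; apply/val_inj/H; rewrite -ltnS; exact: ltn_ord.
have -> : [set a | ancestor T a x] = [set iter (nat_of_ord i) p x | i : 'I_(hit x).+1].
  apply/setP => a; rewrite inE; apply/idP/imsetP.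
    case/ancP => i Hi E; by exists (@Ordinal (hit x).+1 i Hi).
  by case=> i _ ->; apply: (ancE _ _ i).
by rewrite card_imset // card_ord.
Qed.

End Aux.

Theorem lemma11 (V : finType) (T : rtree V) (c1 : V -> option V)
  (Hc1 : leftmost_spec T c1) (k : nat) (hk : 4 <= k)
  (u v : V) (Tu : {set V}) (l : V) :
  ~~ ancestor T u v -> ~~ ancestor T v u ->
  (* Tu = T^u : the canonical subtree with u \in C_{Tu} *)
  canon T c1 k Tu -> inC T c1 k Tu u ->
  is_lca T u v l ->
  (* Case 0 does not apply *)
  ~ adjG T c1 k u v ->
  (* X is non-empty (Case 3 b)) *)
  (exists y, inC T c1 k Tu y /\ ancestor T y v /\ ~~ ancestor T y u) ->
  forall x : V,
    (* x is the deepest vertex of X *)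
    (inC T c1 k Tu x /\ ancestor T x v /\ ~~ ancestor T x u) ->
    (forall y, inC T c1 k Tu y -> ancestor T y v -> ~~ ancestor T y u ->
               depth T y <= depth T x) ->
    (exists x', child T x' x /\ ancestor T x' v) /\
    forall x', child T x' x -> ancestor T x' v ->
      x \in tpath T l v /\ x' \in tpath T l v /\
      index x (tpath T l v) < index x' (tpath T l v).
Proof.
move=> nuv nvu cTu Cu [lu [lv _]] nadj _ x [Cx [xv xu]] _.
have xnv : x <> v.
  move=> E; apply: nadj; split.
    by move=> E'; move/negP: nuv; apply; rewrite E'; apply: (@ancE _ _ _ _ 0).
  by right; exists Tu; rewrite -E.
case/ancP: xv => i Hi Ex.
case/ancP: lv => j Hj El.
have Hij : i < j.
  rewrite ltnNge; apply/negP => Hji; move/negP: xu; apply.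
  case/ancP: lu => m Hm Em.
  apply: (@ancE _ _ _ _ (i - j + m)).
  by rewrite iterD Em -El -iterD subnK.
have i0 : 0 < i by case: i Hi Ex {Hij} => // _ /= E; case: xnv.
split.
  exists (iter i.-1 (par T) v); split; last exact: (@ancE _ _ _ _ i.-1).
  split; first by rewrite -iterS prednK.
  move=> E; have := @iter_inj _ T v i.-1 i ltac:(lia) Hi.
  rewrite E Ex => /(_ erefl); lia.
move=> x' [px' nx'] x'v.
case/ancP: x'v => i' Hi' Ex'.
have Hi'i : i'.+1 = i.
  case: (ltnP i' (hit V T v)) => H.
    apply: (@iter_inj _ T v i'.+1 i) => //; by rewrite iterS Ex' px'.
  have Er : x' = Defs.root T by rewrite -Ex' iter_ge.
  exfalso; apply: nx'; by rewrite -px' Er par_root.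
have dd : depth T v - depth T l = j.
  rewrite !(@depth_hit V T) -El (@hit_iter V T) //; lia.
rewrite /tpath dd.
set s := traject (par T) v j.+1.
have ss : size s = j.+1 by rewrite size_traject.
have us : uniq s.
  apply/(uniqP v) => a b; rewrite !inE ss => Ha Hb.
  rewrite !nth_traject // => E; apply: iter_inj E; lia.
have key : forall m, m <= j -> iter m (par T) v \in rev s /\
    index (iter m (par T) v) (rev s) = j - m.
  move=> m Hm.
  have Hlt : j - m < size (rev s) by rewrite size_rev ss; lia.
  have E : nth v (rev s) (j - m) = iter m (par T) v.
    rewrite nth_rev; last by rewrite -(size_rev s).
    rewrite ss; have -> : j.+1 - (j - m).+1 = m by lia.
    rewrite nth_traject //; lia.
  rewrite -E mem_nth //; split => //; apply: index_uniq => //.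
  by rewrite rev_uniq.
have [K1 K2] := key i (ltnW Hij).
have [K3 K4] := key i' ltac:(lia).
rewrite -Ex -Ex' K2 K4; split => //; split => //; lia.
Qed.
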